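(* Let $f_{\boldsymbol{\theta}}$ be the conformer aggregation network described in the context, with fixed parameters $\boldsymbol{\theta}$. Let $G$ be the 2D graph of a molecule and let $(S_1,\dots,S_K)$, with $S_k=\{(\mathbf{r}_{k,i},Z_{k,i})\}_{i=1}^N$ for $1\le k\le K$, be a sequence of $K$ conformers of that molecule, and let $\hat y=f_{\boldsymbol{\theta}}(G,(S_1,\dots,S_K))$. Then: (i) for any $g_1,\dots,g_K\in E(3)$, $$f_{\boldsymbol{\theta}}(G,(g_1S_1,\dots,g_KS_K))=f_{\boldsymbol{\theta}}(G,(S_1,\dots,S_K));$$ (ii) for any permutation $\pi\in\mathrm{Sym}([K])$, $$f_{\boldsymbol{\theta}}(G,(S_{\pi(1)},\dots,S_{\pi(K)}))=f_{\boldsymbol{\theta}}(G,(S_1,\dots,S_K)).$$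
   Context: $E(3)$ is the Euclidean group of $\mathbb{R}^3$ (translations, rotations, reflections/inversion); $g\in E(3)$, $g(\mathbf r)=Q\mathbf r+\mathbf t$ with $Q$ orthogonal, acts on a conformer by $gS=\{(g(\mathbf r_i),Z_i)\}_{i=1}^N$ (atomic numbers unchanged). $[K]=\{1,\dots,K\}$. 2D branch: the molecule's 2D graph is $G=(V,E)$ (atoms as nodes, covalent bonds as edges) with node features $\mathbf h_v^{(0)}$ and edge features. $L$ graph-attention (GAT) layers compute $\mathbf h_v^{(\ell)}=\sum_{u\in N(v)}\alpha_{v,u}\mathbf W\mathbf h_u^{(\ell-1)}$, where $\alpha_{v,u}$ are attention coefficients produced by a single-layer feedforward network from the node features and $\mathbf W$ is a learnable matrix; the 2D embedding is $\mathbf h^{2D}_G=\sum_{v\in V}\mathbf h_v^{(L)}$. 3D branch: a conformer is $S=\{(\mathbf r_i,Z_i)\}_{i=1}^N$ with $\mathbf r_i\in\mathbb R^3$ Cartesian coordinates and $Z_i\in\mathbb N$ atomic numbers. A geometric message-passing network (e.g. SchNet) that is $E(3)$-invariant (its per-atom outputs depend on coordinates only through interatomic distances) produces per-atom features $\mathbf h_v^{(L)}$, collected as rows of a matrix $\mathbf H_k$ for conformer $S_k$. The conformer embedding is $\mathbf h^{3D}_{S_k}=\sum_{v}(\mathbf A\mathbf h_v^{(L)}+\mathbf a)$ with learnable $\mathbf A,\mathbf a$, and $\mathbf H^{3D}$ is the matrix whose $k$-th column is $\mathbf h^{3D}_{S_k}$. Barycenter branch: each conformer gives an attributed graph $G_k=(\mathbf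 H_k,\mathbf A_k,\boldsymbol\omega_k)$ where $\mathbf A_k$ is the matrix of pairwise interatomic distances (possibly with a cutoff radius) and $\boldsymbol\omega_k=\mathbf 1_N/N$. For attributed graphs $G_1=(\mathbf H_1,\mathbf A_1,\boldsymbol\omega_1)$, $G_2=(\mathbf H_2,\mathbf A_2,\boldsymbol\omega_2)$ of orders $n_1,n_2$, the fused Gromov–Wasserstein distance is $$\mathrm{FGW}_{p,\alpha}(G_1,G_2)=\min_{\boldsymbol\pi\in\Pi(\boldsymbol\omega_1,\boldsymbol\omega_2)}\sum_{i,j,k,l}\Big[(1-\alpha)\,\|\mathbf H_1[i]-\mathbf H_2[j]\|^p+\alpha\,|\mathbf A_1[i,k]-\mathbf A_2[j,l]|^p\Big]\pi_{ij}\pi_{kl},$$ where $\Pi(\boldsymbol\omega_1,\boldsymbol\omega_2)=\{\boldsymbol\pi\in\mathbb R_{\ge0}^{n_1\times n_2}:\boldsymbol\pi\mathbf 1=\boldsymbol\omega_1,\ \boldsymbol\pi^\top\mathbf 1=\boldsymbol\omega_2\}$ and $\alpha\in[0,1]$. The FGW barycenter $\overline G=(\overline{\mathbf H},\overline{\mathbf A},\overline{\boldsymbol\omega})$ is the (taken to be unique) minimizer of $G\mapsto\sum_{k=1}^K\frac1K\mathrm{FGW}_{p,\alpha}(G,G_k)$, and $\mathbf h^{BC}=\sum_v(\overline{\mathbf A}\,\overline{\mathbf H}[v]+\overline{\mathbf a})$ with learnable $\overline{\mathbf A},\overline{\mathbf a}$. Combination: $\mathbf H^{2D}$ and $\mathbf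 H^{BC}$ are the matrices with $K$ columns each equal to $\mathbf h^{2D}_G$, respectively $\mathbf h^{BC}$. With learnable matrices $\mathbf W^{2D},\mathbf W^{3D},\mathbf W^{BC}$, set $\mathbf H^{comb}=\mathbf W^{2D}\mathbf H^{2D}+\mathbf W^{3D}\mathbf H^{3D}+\mathbf W^{BC}\mathbf H^{BC}$, and the output is $\hat y=f_{\boldsymbol\theta}(G,(S_1,\dots,S_K))=\mathbf W^G\big(\frac1K\sum_{k=1}^K\mathbf H^{comb}[k]\big)+\mathbf b^G$, where $\mathbf H^{comb}[k]$ is the $k$-th column and $\boldsymbol\theta$ collects all learnable parameters. *)

(* Defs.v *)
From HB Require Import structures.
From mathcomp Require Import all_boot all_order all_algebra.
From mathcomp Require Import boolp classical_sets reals.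
From mathcomp Require Import topology normedtype sequences.
From mathcomp.analysis Require Import exp.
Set Implicit Arguments. Unset Strict Implicit. Unset Printing Implicit Defensive.
Import Order.TTheory GRing.Theory Num.Theory.
Local Open Scope ring_scope.
Local Open Scope classical_set_scope.

Section Model.
Variable R : realType.

Record conformer (N : nat) := Conformer {
  pos : 'I_N -> 'rV[R]_3;
  Znum : 'I_N -> nat }.

Definition eucl_norm (n : nat) (x : 'rV[R]_n) : R :=
  Num.sqrt (\sum_(c < n) (x 0 c) ^+ 2).

Definition dist (N : nat) (S : conformer N) (i j : 'I_N) : R :=
  eucl_norm (pos S i - pos S j).

(* g(r) = Q r + t, Q orthogonal; in row-vector form r |-> r Q^T + t *)
Record E3 := MkE3 { e3Q : 'M[R]_3; e3t : 'rV[R]_3 }.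
Definition is_E3 (g : E3) : Prop := (e3Q g)^T *m e3Q g = 1%:M.
Definition e3_apply (g : E3) (r : 'rV[R]_3) : 'rV[R]_3 := r *m (e3Q g)^T + e3t g.
Definition e3_act (N : nat) (g : E3) (S : conformer N) : conformer N :=
  Conformer (fun i => e3_apply g (pos S i)) (Znum S).

Record mol_graph (N d : nat) := MolGraph {
  adj : rel 'I_N;
  feat0 : 'I_N -> 'rV[R]_d }.

(* one GAT layer: h_v' = sum_{u in N(v)} alpha_{v,u} W h_u, with alpha from a
   single-layer feedforward network (weights a1,a2, activation act) followed
   by softmax over the neighbourhood *)
Record gat_layer (d : nat) := GatLayer {
  gW : 'M[R]_d; ga1 : 'rV[R]_d; ga2 : 'rV[R]_d; gact : R -> R }.

Definition gat_score (d : nat) (l : gat_layer d) (hv hu : 'rV[R]_d) : R :=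
  gact l (((hv *m gW l) *m (ga1 l)^T) 0 0 + ((hu *m gW l) *m (ga2 l)^T) 0 0).

Definition gat_step (N d : nat) (G : mol_graph N d) (l : gat_layer d)
  (h : 'I_N -> 'rV[R]_d) : 'I_N -> 'rV[R]_d :=
  fun v => \sum_(u | adj G v u)
     (expR (gat_score l (h v) (h u)) /
      \sum_(w | adj G v w) expR (gat_score l (h v) (h w))) *: (h u *m gW l).

Definition gat_embed (N d : nat) (G : mol_graph N d) (ls : seq (gat_layer d))
  : 'rV[R]_d :=
  let hL := foldl (fun h l => gat_step G l h) (feat0 G) ls in
  \sum_(v < N) hL v.

(* attributed graph (H, A, omega) of order n with d-dim features *)
Definition agraph (n d : nat) := ('M[R]_(n, d) * 'M[R]_(n, n) * 'rV[R]_n)%type.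

Definition couplings (n1 n2 : nat) (w1 : 'rV[R]_n1) (w2 : 'rV[R]_n2)
  : set 'M[R]_(n1, n2) :=
  [set pi | (forall i j, 0 <= pi i j) /\
            (forall i, \sum_j pi i j = w1 0 i) /\
            (forall j, \sum_i pi i j = w2 0 j)].

Definition fgw_cost (p alpha : R) (n1 n2 d : nat) (G1 : agraph n1 d)
  (G2 : agraph n2 d) (pi : 'M[R]_(n1, n2)) : R :=
  let: (H1, A1, _) := G1 in let: (H2, A2, _) := G2 in
  \sum_(i < n1) \sum_(j < n2) \sum_(k < n1) \sum_(l < n2)
    ((1 - alpha) * powR (eucl_norm (row i H1 - row j H2)) p
     + alpha * powR `|A1 i k - A2 j l| p) * pi i j * pi k l.

(* FGW_{p,alpha}(G1,G2) = min over couplings (written as inf; the set of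
   couplings is compact and the cost continuous, so the inf is attained) *)
Definition FGW (p alpha : R) (n1 n2 d : nat) (G1 : agraph n1 d)
  (G2 : agraph n2 d) : R :=
  inf [set fgw_cost p alpha G1 G2 pi | pi in couplings G1.2 G2.2].

Definition admissible (n d : nat) (G : agraph n d) : Prop :=
  (forall i, 0 <= G.2 0 i) /\ \sum_i G.2 0 i = 1.

Definition bary_obj (p alpha : R) (K nb N d : nat) (Gs : 'I_K -> agraph N d)
  (G : agraph nb d) : R :=
  \sum_(k < K) K%:R^-1 * FGW p alpha G (Gs k).

Definition is_barycenter (p alpha : R) (K nb N d : nat)
  (Gs : 'I_K -> agraph N d) (G : agraph nb d) : Prop :=
  admissible G /\
  forall G' : agraph nb d, admissible G' -> bary_obj p alpha Gs G <= bary_obj p alpha Gs G'.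

(* the FGW barycenter (taken to be unique; chosen by xget) *)
Definition barycenter (p alpha : R) (K nb N d : nat)
  (Gs : 'I_K -> agraph N d) : agraph nb d :=
  xget (0, 0, 0) (is_barycenter p alpha Gs).

Record params (N d2 d e3 nb eb c o : nat) := Params {
  gat_layers : seq (gat_layer d2);
  geo : conformer N -> 'M[R]_(N, d);
  A3 : 'M[R]_(d, e3); a3 : 'rV[R]_e3;
  fgw_p : R; fgw_alpha : R;
  cutoff : option R;
  Abar : 'M[R]_(d, eb); abar : 'rV[R]_eb;
  W2D : 'M[R]_(d2, c); W3D : 'M[R]_(e3, c); WBC : 'M[R]_(eb, c);
  WG : 'M[R]_(c, o); bG : 'rV[R]_o }.

(* E(3)-invariance of the geometric network: per-atom outputs depend on the
   coordinates only through the interatomic distances (and atomic numbers) *)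
Definition geo_invariant (N d : nat) (phi : conformer N -> 'M[R]_(N, d)) : Prop :=
  forall S S' : conformer N, Znum S = Znum S' ->
    (forall i j, dist S i j = dist S' i j) -> phi S = phi S'.

Section Net.
Variables (N d2 d e3 nb eb c o : nat) (th : params N d2 d e3 nb eb c o).

Definition adj_dist (S : conformer N) : 'M[R]_N :=
  \matrix_(i, j) match cutoff th with
                 | None => dist S i j
                 | Some rc => if dist S i j <= rc then dist S i j else 0
                 end.

Definition conf_graph (S : conformer N) : agraph N d :=
  (geo th S, adj_dist S, \row_(i < N) N%:R^-1).

Definition h3D (S : conformer N) : 'rV[R]_e3 :=
  \sum_(v < N) (row v (geo th S) *m A3 th + a3 th).

Definition hBC (K : nat) (Ss : 'I_K -> conformer N) : 'rV[R]_eb :=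
  let Gb : agraph nb d := barycenter (fgw_p th) (fgw_alpha th) nb (fun k => conf_graph (Ss k)) in
  \sum_(v < nb) (row v Gb.1.1 *m Abar th + abar th).

(* row-vector convention: column k of H^comb is hcomb k *)
Definition net (G : mol_graph N d2) (K : nat) (Ss : 'I_K -> conformer N)
  : 'rV[R]_o :=
  let hcomb k := gat_embed G (gat_layers th) *m W2D th
                 + h3D (Ss k) *m W3D th + hBC Ss *m WBC th in
  (K%:R^-1 *: \sum_(k < K) hcomb k) *m WG th + bG th.

End Net.
End Model.

(* Main.v *)
Require Import Defs.
From HB Require Import structures.
From mathcomp Require Import all_boot all_order all_algebra all_fingroup.
From mathcomp Require Import boolp classical_sets reals.
From mathcomp Require Import topology normedtype sequences.
From mathcomp.analysis Require Import exp.
Import Order.TTheory GRing.Theory Num.Theory.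
Local Open Scope ring_scope.

Lemma sumsq_mx (R : realType) n (x : 'rV[R]_n) :
  \sum_(c < n) (x 0 c) ^+ 2 = (x *m x^T) 0 0.
Proof. by rewrite mxE; apply: eq_bigr => c _; rewrite mxE expr2. Qed.

Lemma dist_e3 (R : realType) N (g : E3 R) (S : conformer R N) i j :
  is_E3 g -> dist (e3_act g S) i j = dist S i j.
Proof.
move=> Hg; rewrite /dist /= /e3_apply /eucl_norm !sumsq_mx.
have -> : pos S i *m (e3Q g)^T + e3t g - (pos S j *m (e3Q g)^T + e3t g)
   = (pos S i - pos S j) *m (e3Q g)^T.
  by rewrite mulmxBl opprD addrACA subrr addr0.
by rewrite trmx_mul trmxK mulmxA -(mulmxA _ _ (e3Q g)) Hg mulmx1.
Qed.

Theorem theorem3p1 (R : realType) (N d2 d e3 nb eb c o : nat)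
  (th : params R N d2 d e3 nb eb c o)
  (Hgeo : geo_invariant (geo th))
  (Halpha : 0 <= fgw_alpha th <= 1)
  (G : mol_graph R N d2) (K : nat) (Ss : 'I_K -> conformer R N)
  (Huniq : exists! Gb : agraph R nb d,
      is_barycenter (fgw_p th) (fgw_alpha th)
        (fun k => conf_graph th (Ss k)) Gb) :
  (forall gs : 'I_K -> E3 R, (forall k, is_E3 (gs k)) ->
     net th G (fun k => e3_act (gs k) (Ss k)) = net th G Ss) /\
  (forall s : 'S_K, net th G (fun k => Ss (s k)) = net th G Ss).
Proof.
split.
  move=> gs Hgs.
  have Eg : forall k, geo th (e3_act (gs k) (Ss k)) = geo th (Ss k).
    by move=> k; apply: Hgeo => // i j; apply: dist_e3.
  have Ec : (fun k => conf_graph th (e3_act (gs k) (Ss k)))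
          = (fun k => conf_graph th (Ss k)).
    apply: funext => k; rewrite /conf_graph Eg /adj_dist.
    congr (_, _, _). apply/matrixP => i j. rewrite !mxE.
    by rewrite dist_e3.
  rewrite /net /hBC.
  rewrite Ec. under eq_bigr => k _ do rewrite /h3D Eg. by [].
move=> s.
have Eb : forall p a (G0 : agraph R nb d),
  bary_obj p a (fun k => conf_graph th (Ss (s k))) G0
  = bary_obj p a (fun k => conf_graph th (Ss k)) G0.
  move=> p a G0; rewrite /bary_obj.
  by rewrite [RHS](reindex_inj (@perm_inj _ s)).
have Ep : is_barycenter (fgw_p th) (fgw_alpha th) (fun k => conf_graph th (Ss (s k)))
   = is_barycenter (fgw_p th) (fgw_alpha th) (fun k => conf_graph th (Ss k)) :> (agraph R nb d -> Prop).
  apply: funext => G0; rewrite /is_barycenter; apply/propext; split.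
    move=> [H1 H2]. split. exact H1. move=> G' HG'. have := H2 G' HG'. rewrite (Eb _ _ G0). by rewrite (Eb _ _ G').
  move=> [H1 H2]. split. exact H1. move=> G' HG'. rewrite (Eb _ _ G0). rewrite (Eb _ _ G'). exact: H2.
rewrite /net /hBC /barycenter.
rewrite Ep.
rewrite [in RHS](reindex_inj (@perm_inj _ s)).
by [].
Qed.
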